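(* Let $G$ be a locally compact group, let $G_e$ be the connected component of the identity, and let $q_e:G\to G/G_e$ be the quotient map (with $G/G_e$ carrying the quotient topology). For $\tau\in\mathcal{T}_{td}(G)$ we have $G_e\subseteq\ker\eta_\tau$, so there is a unique continuous homomorphism $\tilde{\eta}_\tau:G/G_e\to G_\tau$ with $\tilde{\eta}_\tau\circ q_e=\eta_\tau$; let $\tilde{\tau}$ be the coarsest topology on $G/G_e$ making $\tilde{\eta}_\tau$ continuous. Then $\tilde{\tau}\in\mathcal{T}_{td}(G/G_e)$, the map $\tau\mapsto\tilde{\tau}:\mathcal{T}_{td}(G)\to\mathcal{T}_{td}(G/G_e)$ is a semilattice isomorphism (with respect to the operations $\vee$), and $G_\tau=(G/G_e)_{\tilde{\tau}}$ for each $\tau\in\mathcal{T}_{td}(G)$.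
   Context: For a locally compact group $G$ with topology $\tau_G$, $\mathcal{T}(G)$ denotes the set of group topologies $\tau\subseteq\tau_G$ on $G$ (not necessarily Hausdorff) whose completion $G_\tau$ is locally compact; $\eta_\tau:G\to G_\tau$ denotes the natural continuous homomorphism with dense range, and $\tau$ is the topology induced by $\eta_\tau$. For $\tau_1,\tau_2\in\mathcal{T}(G)$, $\tau_1\vee\tau_2$ is the coarsest topology on $G$ making $s\mapsto(\eta_{\tau_1}(s),\eta_{\tau_2}(s)):G\to G_{\tau_1}\times G_{\tau_2}$ continuous; $G_{\tau_1\vee\tau_2}$ is the closure of the image of this map, and $\mathcal{T}(G)$ is a semilattice under $\vee$. $\mathcal{T}_{td}(G)=\{\tau\in\mathcal{T}(G): G_\tau \text{ is totally disconnected}\}$, a subsemilattice of $\mathcal{T}(G)$. *)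

(* Defs.v *)
From Stdlib Require Import List.
Set Implicit Arguments.
Unset Strict Implicit.

Record group := Group {
  gcar :> Type;
  gmul : gcar -> gcar -> gcar;
  ginv : gcar -> gcar;
  gone : gcar;
  gmulA : forall x y z, gmul x (gmul y z) = gmul (gmul x y) z;
  gmul1 : forall x, gmul gone x = x;
  gmulV : forall x, gmul (ginv x) x = gone
}.
Arguments gmul {g} _ _.
Arguments ginv {g} _.
Arguments gone {g}.

Definition is_hom (G H : group) (f : G -> H) : Prop :=
  forall x y, f (gmul x y) = gmul (f x) (f y).

Definition topology_on (T : Type) := (T -> Prop) -> Prop.

Definition is_topology (T : Type) (O : topology_on T) : Prop :=
  O (fun _ => True) /\
  (forall U V, O U -> O V -> O (fun x => U x /\ V x)) /\
  (forall (I : Type) (U : I -> T -> Prop),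
      (forall i, O (U i)) -> O (fun x => exists i, U i x)).

Definition coarser (T : Type) (O1 O2 : topology_on T) : Prop :=
  forall U, O1 U -> O2 U.

Definition continuous_map (A B : Type) (OA : topology_on A) (OB : topology_on B)
  (f : A -> B) : Prop :=
  forall V, OB V -> OA (fun a => V (f a)).

Definition initial_top (A B : Type) (f : A -> B) (OB : topology_on B)
  : topology_on A :=
  fun U => exists V, OB V /\ U = (fun a => V (f a)).

Definition prod_top (A B : Type) (OA : topology_on A) (OB : topology_on B)
  : topology_on (A * B) :=
  fun W => forall p, W p -> exists U V, OA U /\ OB V /\ U (fst p) /\ V (snd p) /\
             (forall a b, U a -> V b -> W (a, b)).

Definition quotient_top (A B : Type) (f : A -> B) (OA : topology_on A)
  : topology_on B :=
  fun V => OA (fun a => V (f a)).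

Definition hausdorff (T : Type) (O : topology_on T) : Prop :=
  forall x y, x <> y -> exists U V, O U /\ O V /\ U x /\ V y /\
    (forall z, U z -> V z -> False).

Definition compact_set (T : Type) (O : topology_on T) (K : T -> Prop) : Prop :=
  forall (I : Type) (U : I -> T -> Prop),
    (forall i, O (U i)) -> (forall x, K x -> exists i, U i x) ->
    exists l : list I, forall x, K x -> exists i, In i l /\ U i x.

Definition locally_compact (T : Type) (O : topology_on T) : Prop :=
  forall x, exists U K, O U /\ U x /\ (forall y, U y -> K y) /\ compact_set O K.

Definition connected_set (T : Type) (O : topology_on T) (S : T -> Prop) : Prop :=
  ~ exists U V, O U /\ O V /\ (forall x, S x -> U x \/ V x) /\
      (exists x, S x /\ U x) /\ (exists x, S x /\ V x) /\
      (forall x, S x -> U x -> V x -> False).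

Definition totally_disconnected (T : Type) (O : topology_on T) : Prop :=
  forall S, connected_set O S -> forall x y, S x -> S y -> x = y.

Definition identity_component (G : group) (O : topology_on G) : G -> Prop :=
  fun x => exists S, connected_set O S /\ S gone /\ S x.

Definition dense_range (A B : Type) (OB : topology_on B) (f : A -> B) : Prop :=
  forall V, OB V -> (exists b, V b) -> exists a, V (f a).

Definition group_topology (G : group) (O : topology_on G) : Prop :=
  is_topology O /\
  (forall x y W, O W -> W (gmul x y) ->
     exists U V, O U /\ O V /\ U x /\ V y /\
       (forall a b, U a -> V b -> W (gmul a b))) /\
  continuous_map O O (@ginv G).

Record topgroup := TopGroup {
  tgrp :> group;
  topen : topology_on tgrp
}.
Arguments TopGroup {tgrp} _.
Arguments topen _ : clear implicits.

Definition lc_group (H : topgroup) : Prop :=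
  group_topology (topen H) /\ hausdorff (topen H) /\ locally_compact (topen H).

(** (H, eta) is the completion G_tau of (G, tau) when the latter is locally
    compact: H is a locally compact (Hausdorff) group, eta : G -> H is a
    continuous homomorphism with dense range, and tau is the topology induced
    by eta. *)
Definition is_lc_completion (G : group) (tau : topology_on G)
  (H : topgroup) (eta : G -> H) : Prop :=
  lc_group H /\ is_hom eta /\ continuous_map tau (topen H) eta /\
  dense_range (topen H) eta /\ tau = initial_top eta (topen H).
Arguments is_lc_completion {G} tau H eta.

Definition calT (G : group) (tauG : topology_on G) (tau : topology_on G) : Prop :=
  group_topology tau /\ coarser tau tauG /\
  exists (H : topgroup) (eta : G -> H), is_lc_completion tau H eta.

Definition calT_td (G : group) (tauG : topology_on G) (tau : topology_on G) : Prop :=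
  group_topology tau /\ coarser tau tauG /\
  exists (H : topgroup) (eta : G -> H), is_lc_completion tau H eta /\
    totally_disconnected (topen H).

(** tau1 \/ tau2: the coarsest topology on G making
    s |-> (s, s) : G -> (G,tau1) x (G,tau2) continuous (equivalently, since
    tau_i is induced by eta_i, making s |-> (eta_1 s, eta_2 s) continuous). *)
Definition top_join (T : Type) (O1 O2 : topology_on T) : topology_on T :=
  initial_top (fun s : T => (s, s)) (prod_top O1 O2).

(* Main.v *)
Require Import Defs.
From Stdlib Require Import List ClassicalEpsilon Classical FunctionalExtensionality PropExtensionality.

Section GroupLemmas.
Variable G : group.
Lemma gmulV_r (x : G) : gmul x (ginv x) = gone.
Proof.
  rewrite <- (gmul1 (gmul x (ginv x))).
  rewrite <- (gmulV (ginv x)) at 1.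
  rewrite <- gmulA. rewrite (gmulA (ginv x) x (ginv x)).
  rewrite gmulV, gmul1. apply gmulV.
Qed.
Lemma gmul_1r (x : G) : gmul x gone = x.
Proof. rewrite <- (gmulV x), gmulA, gmulV_r, gmul1. reflexivity. Qed.
Lemma cancel_l (a x y : G) : gmul a x = gmul a y -> x = y.
Proof. intros H. rewrite <- (gmul1 x), <- (gmul1 y), <- (gmulV a), <- !gmulA, H. reflexivity. Qed.
Lemma cancel_r (a x y : G) : gmul x a = gmul y a -> x = y.
Proof. intros H. rewrite <- (gmul_1r x), <- (gmul_1r y), <- (gmulV_r a), !gmulA, H. reflexivity. Qed.
End GroupLemmas.

Section Hom.
Variables (G K : group) (f : G -> K) (hf : is_hom f).
Lemma hom1 : f gone = gone.
Proof. apply (cancel_l _ (f gone)). rewrite <- hf, gmul1, gmul_1r. reflexivity. Qed.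
Lemma homV x : f (ginv x) = ginv (f x).
Proof. apply (cancel_r _ (f x)). rewrite <- hf, !gmulV. apply hom1. Qed.
End Hom.

Lemma initial_group_top (G K : group) (O : topology_on K) (f : G -> K) :
  is_hom f -> group_topology O -> group_topology (initial_top f O).
Proof.
 intros hf [[HT [HI HU]] [HM HV]].
 split; [split; [|split]|split].
 - exists (fun _ => True); split; auto.
 - intros U V [U' [oU ->]] [V' [oV ->]]. exists (fun x => U' x /\ V' x). split; auto.
 - intros I U hU.
   exists (fun k => exists p : {i : I & {V : K -> Prop | O V /\ U i = (fun a => V (f a))}},
             proj1_sig (projT2 p) k).
   split.
   + apply (HU {i : I & {V : K -> Prop | O V /\ U i = (fun a => V (f a))}} (fun p => proj1_sig (projT2 p))). intros [i [V [oV e]]]. exact oV.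
   + apply functional_extensionality; intro a; apply propositional_extensionality; split.
     * intros [i Ui]. destruct (hU i) as [V [oV e]].
       exists (existT _ i (exist _ V (conj oV e))). simpl. rewrite e in Ui. exact Ui.
     * intros [[i [V [oV e]]] HV']. simpl in HV'. exists i. rewrite e. exact HV'.
 - intros x y W [W' [oW ->]] Wxy. rewrite hf in Wxy.
   destruct (HM _ _ _ oW Wxy) as [U [V [oU [oV [Ux [Vy HUV]]]]]].
   exists (fun a => U (f a)), (fun a => V (f a)).
   split; [exists U; split; auto|]. split; [exists V; split; auto|].
   split; auto. split; auto.
   intros a b Ua Vb. rewrite hf. auto.
 - intros W [W' [oW ->]]. exists (fun k => W' (ginv k)). split. apply HV; auto.
   apply functional_extensionality; intro a. rewrite (homV _ _ _ hf). reflexivity.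
Qed.
Section Main.
Variables (G : group) (tauG : topology_on G) (Q : group) (qe : G -> Q)
  (hq_hom : is_hom qe)
  (hq_surj : forall y : Q, exists x : G, qe x = y)
  (hq_ker : forall x : G, qe x = gone <-> identity_component tauG x).

Definition qinv (y : Q) : G := proj1_sig (constructive_indefinite_description _ (hq_surj y)).
Lemma qinvK y : qe (qinv y) = y.
Proof. unfold qinv. destruct (constructive_indefinite_description _ _) as [x e]. exact e. Qed.

Definition Fq (tau : topology_on G) : topology_on Q := quotient_top qe tau.

Lemma ker_lemma tau (H : topgroup) eta : coarser tau tauG -> is_lc_completion tau H eta ->
  totally_disconnected (topen H) -> forall x, identity_component tauG x -> eta x = gone.
Proof.
 intros hc [_ [heta [hcont _]]] htd x [S [hS [S1 Sx]]].
 rewrite <- (hom1 _ _ _ heta).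
 apply (htd (fun h => exists s, S s /\ eta s = h)).
 - intros [U [V [oU [oV [cov [[h1 [[s1 [Ss1 e1]] U1]] [[h2 [[s2 [Ss2 e2]] V2]] disj]]]]]]].
   subst h1 h2.
   apply hS. exists (fun a => U (eta a)), (fun a => V (eta a)).
   split; [apply hc, hcont, oU|]. split; [apply hc, hcont, oV|].
   split; [intros s Ss; apply cov; exists s; auto|].
   split; [exists s1; auto|]. split; [exists s2; auto|].
   intros s Ss; apply disj; exists s; auto.
 - exists x; auto.
 - exists gone; auto.
Qed.

Lemma sat tau U a b : calT_td tauG tau -> tau U -> qe a = qe b -> U a -> U b.
Proof.
 intros [_ [hc [H [eta [hcomp htd]]]]] hU e Ua.
 pose proof hcomp as hcomp'. destruct hcomp' as [_ [heta [_ [_ htau]]]].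
 rewrite htau in hU. destruct hU as [V [oV ->]].
 assert (E : eta (gmul (ginv a) b) = gone).
 { apply (ker_lemma tau H eta hc hcomp htd). apply hq_ker.
   rewrite hq_hom, (homV _ _ _ hq_hom), e, gmulV. reflexivity. }
 rewrite heta, (homV _ _ _ heta) in E.
 assert (E2 : eta b = eta a).
 { transitivity (gmul (eta a) (gmul (ginv (eta a)) (eta b))).
   - rewrite gmulA, gmulV_r, gmul1. reflexivity.
   - rewrite E, gmul_1r. reflexivity. }
 rewrite E2. exact Ua.
Qed.

Lemma sat_eq tau U : calT_td tauG tau -> tau U ->
  (fun a => exists b, qe b = qe a /\ U b) = U.
Proof.
 intros ht hU. apply functional_extensionality; intro a; apply propositional_extensionality; split.
 - intros [b [e Ub]]. exact (sat tau U b a ht hU e Ub).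
 - intros Ua. exists a; auto.
Qed.

Lemma ker2 tau (H : topgroup) eta a b : calT_td tauG tau -> is_lc_completion tau H eta ->
  qe a = qe b -> eta a = eta b.
Proof.
 intros ht [[_ [hH _]] [_ [hcont _]]] e.
 apply NNPP; intro ne.
 destruct (hH _ _ ne) as [U [V [oU [oV [Ua [Vb disj]]]]]].
 apply (disj (eta b)); auto.
 exact (sat tau (fun x => U (eta x)) a b ht (hcont _ oU) e Ua).
Qed.

Lemma tilde_props tau (H : topgroup) eta : calT_td tauG tau -> is_lc_completion tau H eta ->
  let etat := fun y => eta (qinv y) in
  is_hom etat /\ (forall x, etat (qe x) = eta x) /\
  Fq tau = initial_top etat (topen H) /\ is_lc_completion (Fq tau) H etat.
Proof.
 intros ht hcomp etat.
 assert (he : forall x, etat (qe x) = eta x).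
 { intro x. unfold etat. apply (ker2 tau H); auto. apply qinvK. }
 pose proof hcomp as hcomp'. destruct hcomp' as [hlc [heta [hcont [hdense htau]]]].
 assert (hh : is_hom etat).
 { intros x y. rewrite <- (qinvK x), <- (qinvK y), <- hq_hom, !he. apply heta. }
 assert (hF : Fq tau = initial_top etat (topen H)).
 { apply functional_extensionality; intro U; apply propositional_extensionality.
   unfold Fq, quotient_top. rewrite htau. split.
   - intros [V [oV e]]. exists V; split; auto.
     apply functional_extensionality; intro y. rewrite <- (qinvK y). rewrite he.
     exact (equal_f e (qinv y)).
   - intros [V [oV ->]]. exists V; split; auto.
     apply functional_extensionality; intro a; rewrite he; reflexivity. }
 split; [exact hh|]. split; [exact he|]. split; [exact hF|].
 split; [exact hlc|]. split; [exact hh|]. split.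
 - intros V oV. rewrite hF. exists V; split; auto.
 - split; [|exact hF].
   intros V oV hne. destruct (hdense V oV hne) as [a Va]. exists (qe a). rewrite he. exact Va.
Qed.

End Main.
Section Main2.
Variables (G : group) (tauG : topology_on G) (Q : group) (qe : G -> Q)
  (hq_hom : is_hom qe)
  (hq_surj : forall y : Q, exists x : G, qe x = y)
  (hq_ker : forall x : G, qe x = gone <-> identity_component tauG x).

Lemma main_lemma :
  let tauQ := quotient_top qe tauG in
  exists F : topology_on G -> topology_on Q,
    (forall tau, calT_td tauG tau ->
      forall (H : topgroup) (eta : G -> H), is_lc_completion tau H eta ->
        (forall x, identity_component tauG x -> eta x = gone) /\
        (exists etat : Q -> H,
           (is_hom etat /\ continuous_map tauQ (topen H) etat /\
            (forall x, etat (qe x) = eta x)) /\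
           (forall etat' : Q -> H,
              is_hom etat' /\ continuous_map tauQ (topen H) etat' /\
              (forall x, etat' (qe x) = eta x) -> etat' = etat) /\
           F tau = initial_top etat (topen H) /\
           is_lc_completion (F tau) H etat)) /\
    (forall tau, calT_td tauG tau -> calT_td tauQ (F tau)) /\
    (forall tau1 tau2, calT_td tauG tau1 -> calT_td tauG tau2 ->
       F tau1 = F tau2 -> tau1 = tau2) /\
    (forall sigma, calT_td tauQ sigma -> exists tau, calT_td tauG tau /\ F tau = sigma) /\
    (forall tau1 tau2, calT_td tauG tau1 -> calT_td tauG tau2 ->
       F (top_join tau1 tau2) = top_join (F tau1) (F tau2)).
Proof.
 intros tauQ. exists (Fq G Q qe).
 split; [|split; [|split; [|split]]].
 -
   intros tau ht H eta hcomp.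
   destruct (tilde_props G tauG Q qe hq_hom hq_surj hq_ker tau H eta ht hcomp)
     as [hh [he [hF hc]]].
   split.
   + intros x hx. rewrite <- (hom1 _ _ _ (proj1 (proj2 hcomp))).
     apply (ker2 G tauG Q qe hq_hom hq_ker tau H eta x gone ht hcomp).
     rewrite (hom1 _ _ _ hq_hom). apply hq_ker. exact hx.
   + eexists. split; [split; [exact hh|split; [|exact he]]|split; [|split; [exact hF|exact hc]]].
     * destruct ht as [_ [hcG _]]. destruct hcomp as [_ [_ [hcont _]]].
       intros V oV. unfold tauQ, quotient_top.
       assert (E : (fun a => V (eta (qinv G Q qe hq_surj (qe a)))) = (fun a => V (eta a))).
       { apply functional_extensionality; intro a. 
         specialize (he a). simpl in he. rewrite he. reflexivity. }
       simpl. rewrite E. apply hcG, hcont, oV.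
     * intros etat' [_ [_ he']]. apply functional_extensionality; intro y.
       rewrite <- (qinvK G Q qe hq_surj y). rewrite he', he. reflexivity.
 -
   intros tau ht. pose proof ht as ht'.
   destruct ht' as [hgt [hcG [H [eta [hcomp htd]]]]].
   destruct (tilde_props G tauG Q qe hq_hom hq_surj hq_ker tau H eta ht hcomp)
     as [hh [he [hF hc]]].
   split; [|split].
   + rewrite hF. apply initial_group_top; auto. apply hcomp.
   + intros V hV. unfold tauQ, quotient_top. apply hcG. exact hV.
   + exists H, (fun y => eta (qinv G Q qe hq_surj y)). split; auto.
 -
   intros tau1 tau2 h1 h2 e.
   assert (K : forall t1 t2, calT_td tauG t1 -> Fq G Q qe t1 = Fq G Q qe t2 -> forall U, t1 U -> t2 U).
   { intros t1 t2 ht1 e' U hU.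
     pose proof (sat_eq G tauG Q qe hq_hom hq_ker t1 U ht1 hU) as E.
     assert (F1 : Fq G Q qe t1 (fun y => exists b, qe b = y /\ U b)).
     { unfold Fq, quotient_top. rewrite E. exact hU. }
     rewrite e' in F1. unfold Fq, quotient_top in F1. rewrite E in F1. exact F1. }
   apply functional_extensionality; intro U; apply propositional_extensionality; split.
   + apply K; auto.
   + apply K; auto.
 -
   intros sigma [hgt [hcQ [H [eta' [hcomp htd]]]]].
   exists (initial_top qe sigma). split.
   + split; [|split].
     * apply initial_group_top; auto.
     * intros U [V [oV ->]]. apply hcQ. exact oV.
     * exists H, (fun x => eta' (qe x)).
       destruct hcomp as [hlc [heta [hcont [hdense hsig]]]].
       split; auto. split; auto. split; [|split; [|split]].
       -- intros x y. simpl. rewrite hq_hom. apply heta.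
       -- intros V oV. exists (fun y => V (eta' y)). split; auto.
       -- intros V oV hne. destruct (hdense V oV hne) as [y Vy].
          exists (qinv G Q qe hq_surj y). rewrite qinvK. exact Vy.
       -- apply functional_extensionality; intro U; apply propositional_extensionality.
          rewrite hsig. split.
          ++ intros [V' [[V [oV ->]] ->]]. exists V. split; auto.
          ++ intros [V [oV ->]]. exists (fun y => V (eta' y)). split; auto.
             exists V. split; auto.
   + apply functional_extensionality; intro U; apply propositional_extensionality.
     unfold Fq, quotient_top, initial_top. split.
     * intros [V [oV e]].
       replace U with V; auto.
       apply functional_extensionality; intro y. rewrite <- (qinvK G Q qe hq_surj y).
       symmetry. exact (equal_f e _).
     * intros hU. exists U. split; auto.
 -
   intros tau1 tau2 h1 h2.
   apply functional_extensionality; intro U; apply propositional_extensionality.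
   unfold Fq, quotient_top, top_join, initial_top. split.
   + intros [W [hW eU]].
     exists (fun p : Q * Q => exists U1 V1, tau1 U1 /\ tau2 V1 /\
        (exists a, qe a = fst p /\ U1 a) /\ (exists b, qe b = snd p /\ V1 b) /\
        (forall a b, U1 a -> V1 b -> W (a, b))).
     split.
     * intros p [U1 [V1 [o1 [o2 [[a [ea Ua]] [[b [eb Vb]] h]]]]]].
       exists (fun y => exists a, qe a = y /\ U1 a), (fun y => exists b, qe b = y /\ V1 b).
       split; [unfold Fq, quotient_top; rewrite (sat_eq G tauG Q qe hq_hom hq_ker tau1 U1 h1 o1); exact o1|].
       split; [unfold Fq, quotient_top; rewrite (sat_eq G tauG Q qe hq_hom hq_ker tau2 V1 h2 o2); exact o2|].
       split; [exists a; auto|]. split; [exists b; auto|].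
       intros y1 y2 [a' [ea' Ua']] [b' [eb' Vb']].
       exists U1, V1. split; auto. split; auto. split; [exists a'; auto|]. split; [exists b'; auto|]. exact h.
     * apply functional_extensionality; intro y; apply propositional_extensionality; split.
       -- intros Uy. rewrite <- (qinvK G Q qe hq_surj y) in Uy.
          pose proof (equal_f eU (qinv G Q qe hq_surj y)) as E. simpl in E. rewrite E in Uy.
          destruct (hW _ Uy) as [U1 [V1 [o1 [o2 [u [v h]]]]]].
          exists U1, V1. split; auto. split; auto.
          split; [exists (qinv G Q qe hq_surj y); split; [apply qinvK|exact u]|].
          split; [exists (qinv G Q qe hq_surj y); split; [apply qinvK|exact v]|]. exact h.
       -- intros [U1 [V1 [o1 [o2 [[a [ea Ua]] [[b [eb Vb]] h]]]]]].
          simpl in ea, eb.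
          assert (Va : V1 a) by (apply (sat G tauG Q qe hq_hom hq_ker tau2 V1 b a h2 o2); congruence).
          pose proof (equal_f eU a) as E. simpl in E. rewrite <- ea, E. apply h; auto.
   + intros [W' [hW' ->]].
     exists (fun p : G * G => W' (qe (fst p), qe (snd p))). split.
     * intros p Wp. destruct (hW' _ Wp) as [U1 [V1 [o1 [o2 [u [v h]]]]]].
       exists (fun a => U1 (qe a)), (fun b => V1 (qe b)).
       split; [exact o1|]. split; [exact o2|]. split; [exact u|]. split; [exact v|].
       intros a b ua vb. simpl. apply h; auto.
     * reflexivity.
Qed.
End Main2.

Theorem proposition2p1
  (G : group) (tauG : topology_on G)
  (hG : lc_group (TopGroup tauG))
  (Q : group) (qe : G -> Q)
  (hq_hom : is_hom qe)
  (hq_surj : forall y : Q, exists x : G, qe x = y)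
  (hq_ker : forall x : G, qe x = gone <-> identity_component tauG x) :
  let tauQ := quotient_top qe tauG in
  exists F : topology_on G -> topology_on Q,
    (forall tau, calT_td tauG tau ->
      forall (H : topgroup) (eta : G -> H), is_lc_completion tau H eta ->
        (forall x, identity_component tauG x -> eta x = gone) /\
        (exists etat : Q -> H,
           (is_hom etat /\ continuous_map tauQ (topen H) etat /\
            (forall x, etat (qe x) = eta x)) /\
           (forall etat' : Q -> H,
              is_hom etat' /\ continuous_map tauQ (topen H) etat' /\
              (forall x, etat' (qe x) = eta x) -> etat' = etat) /\
           F tau = initial_top etat (topen H) /\
           is_lc_completion (F tau) H etat)) /\
    (forall tau, calT_td tauG tau -> calT_td tauQ (F tau)) /\
    (forall tau1 tau2, calT_td tauG tau1 -> calT_td tauG tau2 ->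
       F tau1 = F tau2 -> tau1 = tau2) /\
    (forall sigma, calT_td tauQ sigma -> exists tau, calT_td tauG tau /\ F tau = sigma) /\
    (forall tau1 tau2, calT_td tauG tau1 -> calT_td tauG tau2 ->
       F (top_join tau1 tau2) = top_join (F tau1) (F tau2)).
Proof.
  exact (main_lemma G tauG Q qe hq_hom hq_surj hq_ker).
Qed.
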